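(* Let $a_0=0$ and let $a_1<a_2<\cdots$ be the increasing enumeration of $\{m\ge1:\ c_m=1\}$. Then $$\liminf_{n\to\infty}\frac{a_n}{n^2}=\frac16,\qquad \limsup_{n\to\infty}\frac{a_n}{n^2}=\frac12,$$ and the set $\left\{\frac{a_n}{n^2}:\ n\ge1\right\}$ is dense (in the Euclidean topology) in the interval $\left[\frac16,\frac12\right]$.
   Context: For $n\in\mathbb{N}$ let $s_2(n)$ be the sum of the binary digits of $n$ and $t_n=s_2(n)\bmod 2$ (the Prouhet–Thue–Morse sequence). Let $F(X)=\sum_{n\ge1}t_nX^n\in\mathbb{F}_2[[X]]$ and let $G(X)=\sum_{n\ge1}c_nX^n\in\mathbb{F}_2[[X]]$ be its compositional inverse, i.e. $F(G(X))=G(F(X))=X$. The $c_n$ are identified with integers in $\{0,1\}$. *)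

(* Defs.v *)
From HB Require Import structures.
From mathcomp Require Import all_boot all_order all_algebra.
From mathcomp Require Import all_classical all_reals all_analysis.
Set Implicit Arguments. Unset Strict Implicit. Unset Printing Implicit Defensive.
Import Order.TTheory GRing.Theory Num.Theory.
Local Open Scope ring_scope.

(* s_2(n): sum of binary digits of n (bits beyond position n are zero). *)
Definition s2 (n : nat) : nat := (\sum_(i < n.+1) ((n %/ 2 ^ i) %% 2))%N.

Definition tm (n : nat) : 'F_2 := ((s2 n) %% 2)%:R.

(* Truncation of F(X) = sum_{n>=1} t_n X^n to degree N (t_0 = 0 anyway). *)
Definition Ftrunc (N : nat) : {poly 'F_2} := \poly_(i < N.+1) (if i == 0%N then 0 else tm i).

Definition Gtrunc (c : nat -> 'F_2) (N : nat) : {poly 'F_2} := \poly_(i < N.+1) c i.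

(* G = sum_{n>=1} c_n X^n is the compositional inverse of F in F_2[[X]]:
   G has no constant term and F(G(X)) = G(F(X)) = X.  Since F and G have zero
   constant term, the coefficient of X^i (i <= N) of the formal composition
   only depends on the coefficients of degree <= N, so it can be computed
   on the degree-N truncations. *)
Definition is_comp_inverse (c : nat -> 'F_2) : Prop :=
  c 0%N = 0 /\
  forall N i : nat, (i <= N)%N ->
    ((Ftrunc N) \Po (Gtrunc c N))`_i = (i == 1%N)%:R /\
    ((Gtrunc c N) \Po (Ftrunc N))`_i = (i == 1%N)%:R.

Definition is_enum (c : nat -> 'F_2) (a : nat -> nat) : Prop :=
  a 0%N = 0%N /\
  (forall n, (a n < a n.+1)%N) /\
  (forall m, (0 < m)%N -> (c m = 1 <-> exists n, (0 < n)%N /\ a n = m)).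

Definition a_ratio (R : realType) (a : nat -> nat) (n : nat) : R :=
  (a n)%:R / (n ^ 2)%:R.

(* Main.v *)
Require Import Defs.
From HB Require Import structures.
From mathcomp Require Import all_boot all_order all_algebra.
From mathcomp Require Import all_classical all_reals all_analysis.
From mathcomp Require Import zify ring lra.
Import Order.TTheory GRing.Theory Num.Theory numFieldNormedType.Exports.
Local Open Scope classical_set_scope.
Local Open Scope ring_scope.
Set Implicit Arguments. Unset Strict Implicit. Unset Printing Implicit Defensive.

Section Cong.
Variable F : fieldType.
Implicit Types p q r g h : {poly F}.

Definition eqX (n : nat) p q := 'X^n %| p - q.

Lemma eqX_coef n p q : eqX n p q <-> forall i, (i < n)%N -> p`_i = q`_i.
Proof.
split.
  move=> /dvdpP [r Hr] i Hi; apply/eqP; rewrite -subr_eq0 -coefB Hr coefMXn Hi //.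
move=> H; apply/dvdpP; exists (drop_poly n (p - q)).
rewrite -{1}(poly_take_drop n (p - q)).
suff -> : take_poly n (p - q) = 0 by rewrite add0r.
apply/polyP => i; rewrite coef_take_poly coef0 coefB.
case: ifP => // /H ->; by rewrite subrr.
Qed.

Lemma eqX_refl n p : eqX n p p.
Proof. by rewrite /eqX subrr dvdp0. Qed.
Lemma eqX_sym n p q : eqX n p q -> eqX n q p.
Proof. by rewrite /eqX -opprB dvdpNr. Qed.
Lemma eqX_trans n p q r : eqX n p q -> eqX n q r -> eqX n p r.
Proof. move=> H1 H2; rewrite /eqX -(subrK q p) -addrA; exact: dvdp_add. Qed.
Lemma eqX_add n p q p' q' : eqX n p q -> eqX n p' q' -> eqX n (p + p') (q + q').
Proof. move=> H1 H2; rewrite /eqX opprD addrACA; exact: dvdp_add. Qed.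
Lemma eqX_opp n p q : eqX n p q -> eqX n (- p) (- q).
Proof. by rewrite /eqX (_ : - p - - q = - (p - q)) ?dvdpNr //; ring. Qed.
Lemma eqX_mul n p q p' q' : eqX n p q -> eqX n p' q' -> eqX n (p * p') (q * q').
Proof.
move=> H1 H2; rewrite /eqX.
have -> : p * p' - q * q' = (p - q) * p' + q * (p' - q') by ring.
apply: dvdp_add; [exact: dvdp_mulr | exact: dvdp_mull].
Qed.
Lemma eqX_exp n p q k : eqX n p q -> eqX n (p ^+ k) (q ^+ k).
Proof.
move=> H; elim: k => [|k IH]; first exact: eqX_refl.
by rewrite !exprS; apply: eqX_mul.
Qed.
Lemma eqX_le m n p q : (m <= n)%N -> eqX n p q -> eqX m p q.
Proof. move=> Hmn; apply: dvdp_trans; exact: dvdp_exp2l. Qed.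

Lemma eqX_comp n p q g : 'X %| g -> eqX n p q -> eqX n (p \Po g) (q \Po g).
Proof.
move=> /dvdpP [g' ->] /dvdpP [r Hr]; rewrite /eqX -comp_polyB Hr comp_polyM.
rewrite comp_Xn_poly exprMn; apply: dvdp_mull; exact: dvdp_mulIr.
Qed.

Lemma eqX_cancel n p q : q`_0 != 0 -> eqX n (p * q) 0 -> eqX n p 0.
Proof.
move=> Hq; rewrite /eqX !subr0 Gauss_dvdpl //.
apply: coprimep_expl; rewrite coprimep_sym coprimepX.
by rewrite rootE horner_coef0.
Qed.

Lemma eqX_cancelX n p q : eqX n.+1 ('X * p) ('X * q) -> eqX n p q.
Proof.
by rewrite /eqX -mulrBr exprS dvdp_mul2l ?polyX_eq0.
Qed.

End Cong.
Lemma F2_two : (2%:R : 'F_2) = 0.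
Proof. by apply/eqP. Qed.

Lemma F2_addxx (x : 'F_2) : x + x = 0.
Proof. by rewrite -mulr2n -mulr_natr F2_two mulr0. Qed.

Lemma F2_case (x : 'F_2) : x = 0 \/ x = 1.
Proof. case: x => [[|[|//]]] H; [left|right]; exact: val_inj. Qed.

Lemma F2_sqr (x : 'F_2) : x ^+ 2 = x.
Proof. by case: (F2_case x) => ->; rewrite ?expr0n ?expr1n. Qed.

Lemma P2_two : (2%:R : {poly 'F_2}) = 0.
Proof. by rewrite -polyC_natr F2_two. Qed.

Lemma P2_addxx (p : {poly 'F_2}) : p + p = 0.
Proof. by rewrite -mulr2n -mulr_natr P2_two mulr0. Qed.

Lemma P2_sqrD (p q : {poly 'F_2}) : (p + q) ^+ 2 = p ^+ 2 + q ^+ 2.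
Proof. by rewrite sqrrD -mulr_natr P2_two mulr0 addr0. Qed.

Lemma P2_sqr (p : {poly 'F_2}) : p ^+ 2 = p \Po 'X^2.
Proof.
elim/poly_ind: p => [|p c IH]; first by rewrite expr0n /= comp_poly0.
rewrite comp_poly_MXaddC -IH P2_sqrD exprMn -polyC_exp F2_sqr.
done.
Qed.

Lemma P2_oppr (p : {poly 'F_2}) : - p = p.
Proof. by apply/eqP; rewrite -subr_eq0 -opprD P2_addxx oppr0. Qed.

Lemma P2_X1sqr : (1 + 'X : {poly 'F_2}) ^+ 2 = 1 + 'X^2.
Proof. by rewrite P2_sqrD expr1n. Qed.

Lemma s2_wide n M : (n < M)%N -> s2 n = (\sum_(i < M) ((n %/ 2 ^ i) %% 2))%N.
Proof.
elim: M => // M IH; rewrite ltnS leq_eqVlt => /orP [/eqP <- // | H].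
rewrite big_ord_recr /= -(IH H) divn_small ?mod0n ?addn0 //.
exact: ltn_trans H (ltn_expl _ _).
Qed.

Lemma s2_rec n : s2 n = (n %% 2 + s2 (n %/ 2))%N.
Proof.
rewrite (@s2_wide n n.+2) // big_ord_recl /= expn0 divn1.
rewrite (@s2_wide (n %/ 2) n.+1) ?ltnS ?leq_div //.
congr addn; apply: eq_bigr => i _.
by rewrite /bump /= add1n expnS divnMA.
Qed.

Lemma tmE n : tm n = (s2 n)%:R.
Proof. by rewrite /tm Fp_nat_mod. Qed.

Lemma tm_rec n : tm n = (n %% 2)%:R + tm (n %/ 2).
Proof. by rewrite !tmE s2_rec natrD. Qed.

Lemma tm0 : tm 0 = 0.
Proof. by rewrite tmE /s2 big_ord1. Qed.


Lemma eqX_eq (F : fieldType) n (p q : {poly F}) : p = q -> eqX n p q.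
Proof. move=> ->; exact: eqX_refl. Qed.

Definition Egeom (M : nat) : {poly 'F_2} := \poly_(i < M) (~~ odd i)%:R.

Lemma Ftrunc_coef N k : (k < N.+1)%N -> (Ftrunc N)`_k = tm k.
Proof. by move=> H; rewrite /Ftrunc coef_poly H; case: eqP => // ->; rewrite tm0. Qed.

Lemma Ftrunc_coefE N k : (Ftrunc N)`_k = if (k < N.+1)%N then tm k else 0.
Proof. by rewrite /Ftrunc coef_poly; case: ifP => //; case: eqP => // ->; rewrite tm0. Qed.

Lemma Fsq_coef N k : (k < N.+1)%N ->
  (Ftrunc N ^+ 2)`_k = if odd k then 0 else tm k./2.
Proof.
move=> Hk; rewrite P2_sqr coef_comp_poly_Xn // dvdn2 divn2 Ftrunc_coefE.
case: (odd k) => //=.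
by rewrite (leq_ltn_trans _ Hk) // -divn2 leq_div.
Qed.

Lemma Egeom_coef M k : (Egeom M)`_k = if (k < M)%N then (~~ odd k)%:R else 0.
Proof. by rewrite /Egeom coef_poly. Qed.

Lemma F_decomp N :
  eqX N.+1 (Ftrunc N) ((1 + 'X) * (Ftrunc N ^+ 2) + 'X * Egeom N.+1).
Proof.
apply/eqX_coef => k Hk; rewrite Ftrunc_coef // mulrDl mul1r !coefD.
rewrite !coefXM Fsq_coef // Egeom_coef.
case: k Hk => [|j] Hj; first by rewrite /= tm0 !addr0.
have Hj' : (j < N.+1)%N by apply: ltn_trans Hj.
rewrite /= Fsq_coef // Hj' tm_rec modn2 /=.
case Ho: (odd j) => /=.
  by rewrite divn2 /= add0r !addr0.
rewrite add0r addrC divn2 /=; congr (tm _ + _).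
by rewrite uphalf_half Ho.
Qed.

Lemma Egeom_inv M : eqX M ((1 + 'X) ^+ 2 * Egeom M) 1.
Proof.
apply/eqX_coef => k Hk; rewrite P2_X1sqr mulrDl mul1r coefD coefXnM coef1 /Egeom.
rewrite !coef_poly Hk.
case: k Hk => [|[|j]] Hj /=; [by rewrite addr0 | by rewrite addr0 |].
rewrite subn2 /= (ltn_trans _ Hj) // negbK.
by rewrite F2_addxx.
Qed.

Lemma quadF N :
  eqX N.+1 ((1 + 'X) ^+ 2 * Ftrunc N + (1 + 'X) ^+ 3 * Ftrunc N ^+ 2) 'X.
Proof.
set F := Ftrunc N; set u := (1 + 'X : {poly 'F_2}).
have H1 : eqX N.+1 (u ^+ 2 * F) (u ^+ 3 * F ^+ 2 + 'X * (u ^+ 2 * Egeom N.+1)).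
  apply: eqX_trans (eqX_mul (eqX_refl _ (u ^+ 2)) (F_decomp N)) _.
  by apply: eqX_eq; rewrite /u /F; ring.
have H2 := eqX_mul (eqX_refl N.+1 'X) (Egeom_inv N.+1).
have H3 := eqX_trans H1 (eqX_add (eqX_refl _ (u ^+ 3 * F ^+ 2)) H2).
apply: eqX_trans (eqX_add H3 (eqX_refl _ (u ^+ 3 * F ^+ 2))) _.
by apply: eqX_eq; rewrite mulr1 addrAC P2_addxx add0r.
Qed.
Fixpoint sprf (f q : nat) : nat :=
  match f with 0 => 0 | f'.+1 => (4 * sprf f' (q %/ 2) + q %% 2)%N end.
Definition spr q := sprf q q.

Lemma sprf0 f : sprf f 0 = 0%N.
Proof. by elim: f => //= f IH; rewrite ?div0n ?mod0n IH. Qed.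

Lemma sprf_stable f g q : (q <= f)%N -> (q <= g)%N -> sprf f q = sprf g q.
Proof.
elim: f g q => [|f IH] g q.
  move=> Hq _; have Hq0 : q = 0%N by lia.
  by rewrite Hq0 !sprf0.
case: q => [|q] Hf Hg; first by rewrite !sprf0.
case: g Hg => [//|g] Hg /=; rewrite (IH g) //; lia.
Qed.

Lemma spr_rec q : spr q = (4 * spr (q %/ 2) + q %% 2)%N.
Proof.
case: q => [|q]; first by [].
rewrite /spr /= (@sprf_stable q (q.+1 %/ 2)) //; lia.
Qed.

Lemma spr_double m b : (b <= 1)%N -> spr (2 * m + b) = (4 * spr m + b)%N.
Proof.
move=> Hb; rewrite spr_rec; congr (4 * spr _ + _)%N; lia.
Qed.

Lemma spr_geq q : (q <= spr q)%N.
Proof.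
elim: q {-2}q (leqnn q) => [|n IH] q Hq; first by move: Hq; rewrite leqn0 => /eqP ->.
rewrite spr_rec.
case: q Hq => [//|q] Hq.
have H := IH (q.+1 %/ 2)%N ltac:(lia).
lia.
Qed.

Lemma spr_mono q : (spr q < spr q.+1)%N.
Proof.
elim: q {-2}q (leqnn q) => [|n IH] q Hq.
  by move: Hq; rewrite leqn0 => /eqP ->.
have [m [b [Hb Hqe]]] : exists m b, (b <= 1)%N /\ q = (2 * m + b)%N.
  exists (q %/ 2)%N, (q %% 2)%N; split; lia.
subst q.
case: b Hb Hq => [|[|//]] _ Hq.
  have E1 := @spr_double m 0 isT; have E2 := @spr_double m 1 isT.
  rewrite (_ : (2 * m + 0).+1 = 2 * m + 1)%N ?E1 ?E2; lia.
rewrite (_ : (2 * m + 1).+1 = 2 * m.+1 + 0)%N; last by lia.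
rewrite !spr_double //.
have : (spr m < spr m.+1)%N by apply: IH; lia.
lia.
Qed.

Lemma spr_lt : {homo spr : i j / (i < j)%N}.
Proof. exact: homo_ltn ltn_trans spr_mono. Qed.

Lemma spr_inj : injective spr.
Proof.
move=> i j H; case: (ltngtP i j) => // Hij.
  by move: (spr_lt Hij); rewrite H ltnn.
by move: (spr_lt Hij); rewrite H ltnn.
Qed.

Lemma spr_pos q : (0 < q)%N -> (0 < spr q)%N.
Proof. move=> H; exact: leq_trans H (spr_geq q). Qed.

Definition inSb (e : nat) : bool := [exists q : 'I_e.+1, spr q == e].

Lemma inSP e : reflect (exists q, spr q = e) (inSb e).
Proof.
apply: (iffP existsP) => [[q /eqP H]|[q H]]; first by exists q.
have Hq : (q < e.+1)%N by rewrite ltnS -H spr_geq.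
by exists (Ordinal Hq); rewrite /= H.
Qed.

Lemma inS_rec e : inSb e = ((e %% 4 <= 1)%N && inSb (e %/ 4)).
Proof.
apply/inSP/andP => [[q Hq]|[He /inSP [q Hq]]].
  move: Hq; rewrite spr_rec => <-; split; first by lia.
  by apply/inSP; exists (q %/ 2)%N; lia.
exists (2 * q + e %% 4)%N; rewrite spr_double // Hq; lia.
Qed.

Lemma inS0 : inSb 0.
Proof. by apply/inSP; exists 0%N. Qed.

Lemma comp_poly_exp (R : comNzRingType) (p q : {poly R}) k :
  (p ^+ k) \Po q = (p \Po q) ^+ k.
Proof.
elim: k => [|k IH]; first by rewrite !expr0 -polyC1 comp_polyC.
by rewrite !exprS comp_polyM IH.
Qed.

Lemma P2_pow2 (p : {poly 'F_2}) k : p ^+ (2 ^ k) = p \Po 'X^(2 ^ k).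
Proof.
elim: k => [|k IH]; first by rewrite expn0 expr1 expr1 comp_polyXr.
rewrite expnSr exprM IH P2_sqr -comp_polyA comp_Xn_poly -exprM.
by rewrite mulnC.
Qed.

Lemma coef_pow4 (p : {poly 'F_2}) k :
  (p ^+ 4)`_k = if (4 %| k)%N then p`_(k %/ 4) else 0.
Proof. by rewrite (P2_pow2 p 2) coef_comp_poly_Xn. Qed.

Lemma X1_pow8 : (1 + 'X : {poly 'F_2}) ^+ 8 = 1 + 'X^8.
Proof.
by rewrite (P2_pow2 _ 3) comp_polyD comp_polyX -polyC1 comp_polyC.
Qed.

Definition Qpoly (M : nat) : {poly 'F_2} := \poly_(e < M) (inSb e)%:R.

Lemma Qpoly_coef M e : (Qpoly M)`_e = if (e < M)%N then (inSb e)%:R else 0.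
Proof. by rewrite /Qpoly coef_poly. Qed.

Lemma Q_fix M : eqX M (Qpoly M) ((1 + 'X) * Qpoly M ^+ 4).
Proof.
apply/eqX_coef => k Hk; rewrite mulrDl mul1r coefD coefXM !coef_pow4 !Qpoly_coef Hk.
case: k Hk => [|j] Hj; first by rewrite dvdn0 div0n Hj /= addr0.
rewrite /= (leq_ltn_trans (leq_div _ _) Hj).
rewrite (leq_ltn_trans (leq_div _ _) (ltn_trans (ltnSn j) Hj)).
rewrite inS_rec /dvdn.
have Hr : (j.+1 %% 4 < 4)%N by rewrite ltn_pmod.
case Hr4: (j.+1 %% 4)%N Hr => [|[|[|[|r]]]] // _.
- rewrite (_ : (j %% 4) = 3)%N /=; last by lia.
  by rewrite addr0.
- rewrite (_ : (j %% 4) = 0)%N /=; last by lia.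
  by rewrite add0r (_ : (j.+1 %/ 4) = (j %/ 4))%N //; lia.
- rewrite (_ : (j %% 4) = 1)%N /=; last by lia.
  by rewrite addr0.
- rewrite (_ : (j %% 4) = 2)%N /=; last by lia.
  by rewrite addr0.
Qed.

Lemma eqX_compXn (m d : nat) (p q : {poly 'F_2}) :
  eqX m p q -> eqX (m * d) (p \Po 'X^d) (q \Po 'X^d).
Proof.
move=> /dvdpP [r Hr]; rewrite /eqX -comp_polyB Hr comp_polyM comp_Xn_poly -exprM mulnC.
exact: dvdp_mulIr.
Qed.

Definition Ppoly (M : nat) : {poly 'F_2} := Qpoly M \Po 'X^8.

Lemma P_fix M : eqX (M * 8) (Ppoly M) ((1 + 'X) ^+ 8 * Ppoly M ^+ 4).
Proof.
have := eqX_compXn 8 (Q_fix M).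
by rewrite comp_polyM comp_poly_exp comp_polyD comp_polyX -polyC1 comp_polyC polyC1 X1_pow8.
Qed.

Lemma Ppoly_coef0 M : (0 < M)%N -> (Ppoly M)`_0 = 1.
Proof. by move=> HM; rewrite /Ppoly coef_comp_poly_Xn // dvdn0 div0n Qpoly_coef HM inS0. Qed.


Lemma eqX_sub0 (F : fieldType) n (p q : {poly F}) : eqX n p q <-> eqX n (p - q) 0.
Proof. by rewrite /eqX subr0. Qed.

Lemma P_cube M n : (0 < M)%N -> (n <= M * 8)%N ->
  eqX n ((1 + 'X) ^+ 8 * Ppoly M ^+ 3) 1.
Proof.
move=> HM Hn; apply: (eqX_le Hn).
have H := eqX_sym (P_fix M).
apply/eqX_sub0; apply: (@eqX_cancel _ _ _ (Ppoly M)).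
  by rewrite Ppoly_coef0 // oner_eq0.
move/eqX_sub0: H; congr eqX; ring.
Qed.

Definition cstar (m : nat) : 'F_2 :=
  ((m == 1%N) || (m == 2%N) ||
   [&& (3 <= m)%N, (m.+1 %% 8 < 4)%N & inSb (m.+1 %/ 8)])%:R.

Lemma Ppoly_coef M k : (k < M * 8)%N ->
  (Ppoly M)`_k = if (8 %| k)%N then (inSb (k %/ 8))%:R else 0.
Proof.
move=> Hk; rewrite /Ppoly coef_comp_poly_Xn // Qpoly_coef.
case: ifP => // _; rewrite ifT //; lia.
Qed.

Lemma Gtrunc_coef c N k : (Gtrunc c N)`_k = if (k < N.+1)%N then c k else 0.
Proof. by rewrite /Gtrunc coef_poly. Qed.

Lemma X1_cube : (1 + 'X : {poly 'F_2}) ^+ 3 = 1 + 'X + 'X^2 + 'X^3.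
Proof.
rewrite exprS P2_X1sqr.
have -> : ('X^3 : {poly 'F_2}) = 'X * 'X^2 by rewrite -exprS.
ring.
Qed.

Ltac dv8 X :=
  first [ rewrite (_ : (8 %| X)%N = false); [| by rewrite /dvdn; apply/negbTE/eqP; lia]
        | rewrite (_ : (8 %| X)%N = true); [| by rewrite /dvdn; apply/eqP; lia] ].

Lemma V_eq N : eqX N.+2 ('X + 'X * Gtrunc cstar N) (1 + (1 + 'X) ^+ 3 * Ppoly N.+2).
Proof.
apply/eqX_coef => k Hk.
have HP : forall i, (i <= k)%N -> (Ppoly N.+2)`_i = if (8 %| i)%N then (inSb (i %/ 8))%:R else 0.
  move=> i Hi; apply: Ppoly_coef; lia.
rewrite X1_cube !mulrDl mul1r !coefD coefXM coefX coef1 !coefXnM (mulrC 'X) coefMX.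
rewrite Gtrunc_coef.
case: k Hk HP => [|[|[|[|j]]]] Hk HP.
- by rewrite /= !HP //= div0n inS0; apply/eqP.
- by rewrite /= !HP //= ?div0n ?inS0; apply/eqP.
- by rewrite /= !HP //= ?div0n ?inS0 ifT; [apply/eqP | lia].
- by rewrite /= !HP //= ?div0n ?inS0 ifT; [apply/eqP | lia].
rewrite /= !HP; [|lia|lia|lia|lia].
rewrite /cstar /=.
have Hr : ((j.+4) %% 8 < 8)%N by rewrite ltn_pmod.
case E: ((j.+4) %% 8)%N Hr => [|[|[|[|[|[|[|[|r]]]]]]]] // _.
all: dv8 j.+4; dv8 j.+3; dv8 j.+2; dv8 j.+1.
all: rewrite ifT; [|lia].
all: rewrite /= ?add0r ?addr0 //.
all: congr (GRing.natmul _ (nat_of_bool (inSb _))); lia.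
Qed.

Lemma P2_mulrn4 (p : {poly 'F_2}) : p *+ 4 = 0.
Proof. by rewrite (_ : 4 = 2 * 2)%N // mulrnA mulr2n P2_addxx ?mul0rn. Qed.

Lemma cubic_star N :
  eqX N.+1 ((1 + Gtrunc cstar N) ^+ 2 * 'X + (1 + Gtrunc cstar N) ^+ 3 * 'X ^+ 2)
    (Gtrunc cstar N).
Proof.
set G := Gtrunc cstar N; set P := Ppoly N.+2; set u := (1 + 'X : {poly 'F_2}).
set V := 'X + 'X * G; set A := u ^+ 3 * P.
have HV : eqX N.+2 V (1 + A) by exact: V_eq.
have H1 : eqX N.+2 ('X * ((1 + G) ^+ 2 * 'X + (1 + G) ^+ 3 * 'X ^+ 2 - G))
                   (V ^+ 2 + V ^+ 3 - V + 'X).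
  by apply: eqX_eq; rewrite /V; ring.
have H2 : eqX N.+2 (V ^+ 2 + V ^+ 3 - V + 'X) ((1 + A) ^+ 2 + (1 + A) ^+ 3 - (1 + A) + 'X).
  apply: eqX_add; last exact: eqX_refl.
  apply: eqX_add; last exact: eqX_opp.
  by apply: eqX_add; apply: eqX_exp.
have H3 : (1 + A) ^+ 2 + (1 + A) ^+ 3 - (1 + A) + 'X =
          u + u * (u ^+ 8 * P ^+ 3) + (A + A ^+ 2) *+ 4.
  by rewrite /A /u; ring.
have H4 : eqX N.+2 (u + u * (u ^+ 8 * P ^+ 3) + (A + A ^+ 2) *+ 4) (u + u * 1 + 0).
  rewrite P2_mulrn4; apply: eqX_add; last exact: eqX_refl.
  apply: eqX_add; first exact: eqX_refl.
  apply: eqX_mul; first exact: eqX_refl.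
  by apply: P_cube => //; lia.
have H5 := eqX_trans H1 (eqX_trans H2 (eqX_trans (eqX_eq _ H3) H4)).
rewrite mulr1 addr0 P2_addxx -(mulr0 'X) in H5.
by apply/eqX_sub0; apply: eqX_cancelX.
Qed.

Lemma X_dvd (p : {poly 'F_2}) : p`_0 = 0 -> 'X %| p.
Proof.
move=> H; rewrite -(subr0 'X) -polyC0 dvdp_XsubCl rootE horner_coef0 H //.
Qed.

Lemma X_dvd_horner (p : {poly 'F_2}) : 'X %| p -> p.[0] = 0.
Proof.
by rewrite -(subr0 'X) -polyC0 dvdp_XsubCl rootE => /eqP.
Qed.

Lemma Ftrunc0 N : (Ftrunc N).[0] = 0.
Proof. by rewrite horner_coef0 Ftrunc_coef // tm0. Qed.

Lemma comp_quad N (G : {poly 'F_2}) : 'X %| G ->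
  eqX N.+1 ((1 + G) ^+ 2 * (Ftrunc N \Po G) + (1 + G) ^+ 3 * (Ftrunc N \Po G) ^+ 2) G.
Proof.
move=> HG; have := eqX_comp HG (quadF N).
rewrite comp_polyD (comp_polyM ((1 + 'X) ^+ 2)) (comp_polyM ((1 + 'X) ^+ 3)).
by rewrite !comp_poly_exp comp_polyD comp_polyX -polyC1 comp_polyC polyC1.
Qed.

Lemma cubic_unique N (G1 G2 : {poly 'F_2}) :
  eqX N.+1 ((1 + G1) ^+ 2 * 'X + (1 + G1) ^+ 3 * 'X ^+ 2) G1 ->
  eqX N.+1 ((1 + G2) ^+ 2 * 'X + (1 + G2) ^+ 3 * 'X ^+ 2) G2 ->
  eqX N.+1 G1 G2.
Proof.
move=> /eqX_sub0 H1 /eqX_sub0 H2.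
have H := eqX_add H1 (eqX_opp H2); rewrite oppr0 addr0 in H.
apply/eqX_sub0.
apply: (@eqX_cancel _ _ _ ('X * (2%:R + G1 + G2) + 'X ^+ 2 *
   ((1 + G1) ^+ 2 + (1 + G1) * (1 + G2) + (1 + G2) ^+ 2) - 1)).
  rewrite -horner_coef0 !hornerE expr2 !mul0r !add0r.
  by rewrite oppr_eq0 oner_eq0.
move: H; congr eqX; ring.
Qed.

Lemma FG_inv N (G : {poly 'F_2}) : 'X %| G ->
  eqX N.+1 ((1 + G) ^+ 2 * 'X + (1 + G) ^+ 3 * 'X ^+ 2) G ->
  eqX N.+1 (Ftrunc N \Po G) 'X.
Proof.
move=> HG /eqX_sub0 Hc; have /eqX_sub0 Hq := comp_quad N HG.
have H := eqX_add Hq (eqX_opp Hc); rewrite oppr0 addr0 in H.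
apply/eqX_sub0.
apply: (@eqX_cancel _ _ _ ((1 + G) ^+ 2 + (1 + G) ^+ 3 * (Ftrunc N \Po G + 'X))).
  rewrite -horner_coef0 !hornerE horner_comp (X_dvd_horner HG) Ftrunc0.
  by rewrite !addr0 mulr0 addr0 expr1n oner_eq0.
move: H; congr eqX; ring.
Qed.

Lemma GF_inv N (G : {poly 'F_2}) : 'X %| G -> eqX N.+1 (Ftrunc N \Po G) 'X ->
  eqX N.+1 (G \Po Ftrunc N) 'X.
Proof.
move=> HG HFG.
have HF : 'X %| Ftrunc N by apply: X_dvd; rewrite -horner_coef0 Ftrunc0.
set Z := G \Po Ftrunc N.
have HZ : 'X %| Z by apply: X_dvd; rewrite -horner_coef0 horner_comp Ftrunc0 (X_dvd_horner HG).
have HFZ : eqX N.+1 (Ftrunc N \Po Z) (Ftrunc N).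
  rewrite /Z comp_polyA.
  by have := eqX_comp HF HFG; rewrite comp_polyX.
have H1 := comp_quad N HZ.
have H2 : eqX N.+1 ((1 + Z) ^+ 2 * Ftrunc N + (1 + Z) ^+ 3 * Ftrunc N ^+ 2) Z.
  apply: eqX_trans H1.
  apply: eqX_add; apply: eqX_mul (eqX_refl _ _) _; last apply: eqX_exp; exact: eqX_sym.
have /eqX_sub0 H3 := quadF N; move/eqX_sub0: H2 => H2.
have H := eqX_add H2 (eqX_opp H3); rewrite oppr0 addr0 in H.
apply/eqX_sub0.
apply: (@eqX_cancel _ _ _ ((2%:R + Z + 'X) * Ftrunc N +
   ((1 + Z) ^+ 2 + (1 + Z) * (1 + 'X) + (1 + 'X) ^+ 2) * Ftrunc N ^+ 2 - 1)).
  rewrite -horner_coef0 !hornerE Ftrunc0 /= !mulr0 !add0r.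
  by rewrite oppr_eq0 oner_eq0.
move: H; congr eqX; ring.
Qed.

Lemma cstar0 : cstar 0 = 0.
Proof. by []. Qed.

Lemma XdG c N : c 0%N = 0 -> 'X %| Gtrunc c N.
Proof. by move=> H; apply: X_dvd; rewrite Gtrunc_coef H. Qed.

Lemma cstar_inv : is_comp_inverse cstar.
Proof.
split; first exact: cstar0.
move=> N i Hi.
have HG := XdG N cstar0.
have FG := FG_inv HG (cubic_star N).
have GF := GF_inv HG FG.
move/eqX_coef: FG => FG; move/eqX_coef: GF => GF.
by rewrite FG ?GF ?coefX.
Qed.

Lemma comp_inv_unique c : is_comp_inverse c -> forall m, c m = cstar m.
Proof.
move=> [c0 Hc] N.
have HG := XdG N c0.
have FG : eqX N.+1 (Ftrunc N \Po Gtrunc c N) 'X.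
  by apply/eqX_coef => i Hi; rewrite coefX; case: (Hc N i Hi).
have Hq := comp_quad N HG.
have Hcub : eqX N.+1 ((1 + Gtrunc c N) ^+ 2 * 'X + (1 + Gtrunc c N) ^+ 3 * 'X ^+ 2) (Gtrunc c N).
  apply: eqX_trans Hq.
  apply: eqX_add; apply: eqX_mul (eqX_refl _ _) _; last apply: eqX_exp; exact: eqX_sym.
have /eqX_coef H := cubic_unique Hcub (cubic_star N).
by have := H N (ltnSn N); rewrite !Gtrunc_coef ltnSn.
Qed.

Definition aE (n : nat) : nat :=
  if (n <= 2)%N then n else (8 * spr (n.+1 %/ 4) + n.+1 %% 4 - 1)%N.

Lemma spr1 : spr 1 = 1%N.
Proof. by []. Qed.

Lemma aE_mono n : (aE n < aE n.+1)%N.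
Proof.
rewrite /aE.
case: (leqP n 1) => Hn.
  by rewrite (leq_trans Hn) // (_ : (n.+1 <= 2)%N) //.
case: (leqP n 2) => Hn2.
  have -> : n = 2%N by lia.
  by [].
rewrite ifF; last by apply/negbTE; rewrite -ltnNge; lia.
set q := (n.+1 %/ 4)%N.
have Hq : (0 < q)%N by rewrite /q; lia.
have Hs := spr_pos Hq.
have Hs1 := spr_mono q.
case: (ltnP (n.+1 %% 4) 3) => Hr.
  rewrite (_ : (n.+2 %/ 4) = q)%N; last by rewrite /q; lia.
  lia.
rewrite (_ : (n.+2 %/ 4) = q.+1)%N; last by rewrite /q; lia.
lia.
Qed.

Lemma F2_natb (b : bool) : (b%:R : 'F_2) = 1 <-> b.
Proof. by case: b. Qed.

Lemma aE_range m : (0 < m)%N -> (cstar m = 1 <-> exists n, (0 < n)%N /\ aE n = m).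
Proof.
move=> Hm; rewrite /cstar F2_natb; split.
  case/orP => [/orP [/eqP -> | /eqP ->] | /and3P [H3 H8 /inSP [q Hq]]].
  - by exists 1%N.
  - by exists 2%N.
  have Hq0 : (0 < q)%N.
    case: q Hq => // Hq; rewrite /spr /= in Hq; lia.
  exists (4 * q - 1 + m.+1 %% 8)%N; split; first by lia.
  rewrite /aE ifF; last by apply/negbTE; rewrite -ltnNge; lia.
  rewrite (_ : ((4 * q - 1 + m.+1 %% 8).+1 %/ 4) = q)%N; last by lia.
  rewrite Hq; lia.
move=> [n [Hn <-]]; rewrite /aE.
case: (leqP n 2) => Hn2.
  by case: n Hn Hn2 => [|[|[|]]].
apply/orP; right.
set q := (n.+1 %/ 4)%N.
have Hq : (0 < q)%N by rewrite /q; lia.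
have Hs := spr_pos Hq.
apply/and3P; split; [lia | lia |].
apply/inSP; exists q; lia.
Qed.

Lemma enum_unique (a b : nat -> nat) :
  a 0%N = 0%N -> b 0%N = 0%N ->
  (forall n, (a n < a n.+1)%N) -> (forall n, (b n < b n.+1)%N) ->
  (forall m, (0 < m)%N -> (exists n, (0 < n)%N /\ a n = m) -> (exists n, (0 < n)%N /\ b n = m)) ->
  (forall m, (0 < m)%N -> (exists n, (0 < n)%N /\ b n = m) -> (exists n, (0 < n)%N /\ a n = m)) ->
  forall n, a n = b n.
Proof.
move=> a0 b0 Ha Hb Hab Hba.
have Ham := homo_ltn ltn_trans Ha; have Hbm := homo_ltn ltn_trans Hb.
have refl : forall (f : nat -> nat), {homo f : i j / (i < j)%N} ->
    forall i j, (f i < f j)%N -> (i < j)%N.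
  move=> f Hf i j Hij; case: (ltngtP i j) => // H.
    by move: (Hf _ _ H); lia.
  by move: Hij; rewrite H ltnn.
elim/ltn_ind => n IH.
case: n IH => [|n] IH; first by rewrite a0 b0.
have Han : (0 < a n.+1)%N by rewrite -a0; apply: Ham.
have Hbn : (0 < b n.+1)%N by rewrite -b0; apply: Hbm.
have [p [Hp Hpe]] := Hab _ Han (ex_intro _ n.+1 (conj (ltn0Sn n) erefl)).
have [q [Hq Hqe]] := Hba _ Hbn (ex_intro _ n.+1 (conj (ltn0Sn n) erefl)).
case: (ltngtP p n.+1) => Hpn.
- have := Ham _ _ Hpn; rewrite (IH _ Hpn) Hpe; lia.
- have Hbb := Hbm _ _ Hpn.
  have Hqn : (q < n.+1)%N by apply: (refl a Ham); lia.
  have := Hbm _ _ Hqn; rewrite -(IH _ Hqn) Hqe; lia.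
- by rewrite -Hpe Hpn.
Qed.

Lemma spr_bounds q : (q * q + 2 * q <= 3 * spr q)%N /\ (spr q <= q * q)%N.
Proof.
elim: q {-2}q (leqnn q) => [|n IH] q Hq.
  by move: Hq; rewrite leqn0 => /eqP ->.
have [m [b [Hb Hqe]]] : exists m b, (b <= 1)%N /\ q = (2 * m + b)%N.
  exists (q %/ 2)%N, (q %% 2)%N; split; lia.
subst q; rewrite spr_double //.
have [H1 H2] := IH m ltac:(lia).
split; nia.
Qed.

Lemma spr_pow k : spr (2 ^ k) = (2 ^ k * 2 ^ k)%N.
Proof.
elim: k => [|k IH]; first by [].
rewrite expnS (_ : 2 * 2 ^ k = 2 * 2 ^ k + 0)%N ?spr_double ?IH; [lia|by []|lia].
Qed.

Lemma spr_pow1 k : (3 * spr (2 ^ k - 1) + 1 = 2 ^ k * 2 ^ k)%N.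
Proof.
elim: k => [|k IH]; first by [].
have Hp : (0 < 2 ^ k)%N by rewrite expn_gt0.
rewrite expnS (_ : 2 * 2 ^ k - 1 = 2 * (2 ^ k - 1) + 1)%N ?spr_double; [nia|by []|lia].
Qed.

Lemma aE_big n : (2 < n)%N -> exists q r, [/\ (0 < q)%N, (r < 4)%N, n.+1 = (4 * q + r)%N &
  aE n = (8 * spr q + r - 1)%N].
Proof.
move=> Hn; exists (n.+1 %/ 4)%N, (n.+1 %% 4)%N; split; try lia.
by rewrite /aE ifF //; apply/negbTE; rewrite -ltnNge.
Qed.

Lemma aE_lb n : (0 < n)%N -> (n * n <= 6 * aE n)%N.
Proof.
move=> Hn; case: (leqP n 2) => H2.
  by rewrite /aE H2; case: n Hn H2 => [|[|[|]]].
have [q [r [Hq Hr Hnq ->]]] := aE_big H2.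
have [H1 _] := spr_bounds q.
nia.
Qed.

Lemma aE_ub n : (2 * aE n <= n * n + 2 * n)%N.
Proof.
case: (leqP n 2) => H2.
  by rewrite /aE H2; case: n H2 => [|[|[|]]].
have [q [r [Hq Hr Hnq ->]]] := aE_big H2.
have [_ H1] := spr_bounds q.
nia.
Qed.

Lemma aE_le n : (0 < n)%N -> (aE n <= n * n)%N.
Proof.
move=> Hn; case: (leqP n 1) => H1.
  by have -> : n = 1%N by lia.
have := aE_ub n; nia.
Qed.

Lemma aE_hi k : ((4 * 2 ^ k - 1) * (4 * 2 ^ k - 1) <= 2 * aE (4 * 2 ^ k - 1))%N.
Proof.
set n := (4 * 2 ^ k - 1)%N.
have Hp : (0 < 2 ^ k)%N by rewrite expn_gt0.
have H2 : (2 < n)%N by rewrite /n; lia.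
rewrite /aE ifF; last by apply/negbTE; rewrite -ltnNge.
rewrite (_ : (n.+1 %/ 4) = 2 ^ k)%N; last by rewrite /n; lia.
rewrite (_ : (n.+1 %% 4) = 0)%N; last by rewrite /n; lia.
rewrite spr_pow /n; nia.
Qed.

Lemma aE_lo k : (2 <= k)%N ->
  (6 * aE (4 * 2 ^ k - 5) <= (4 * 2 ^ k - 5) * (4 * 2 ^ k - 5) + 11 * (4 * 2 ^ k - 5))%N.
Proof.
move=> Hk; set n := (4 * 2 ^ k - 5)%N.
have Hp : (4 <= 2 ^ k)%N by rewrite (_ : 4 = 2 ^ 2)%N // leq_exp2l.
have H2 : (2 < n)%N by rewrite /n; lia.
rewrite /aE ifF; last by apply/negbTE; rewrite -ltnNge.
rewrite (_ : (n.+1 %/ 4) = 2 ^ k - 1)%N; last by rewrite /n; lia.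
rewrite (_ : (n.+1 %% 4) = 0)%N; last by rewrite /n; lia.
have := spr_pow1 k; rewrite /n; nia.
Qed.

Section An.
Variable R : realType.
Lemma harm_le (m n : nat) : (n <= m)%N -> harmonic m <= harmonic n :> R.
Proof.
move=> H; rewrite /= lef_pV2 ?posrE ?ltr0n // ler_nat ltnS //.
Qed.

Lemma nat_ivt (P : nat -> bool) m1 m2 : (m1 <= m2)%N -> P m1 -> ~~ P m2 ->
  exists k, [/\ (m1 <= k)%N, (k < m2)%N, P k & ~~ P k.+1].
Proof.
elim: m2 => [|m IH] H1 H2 H3.
  by move: H1; rewrite leqn0 => /eqP Hm; subst m1; rewrite H2 in H3.
case: (leqP m1 m) => Hm.
  case HP: (P m).
    by exists m; split.
  have [k [? ? ? ?]] := IH Hm H2 (negbT HP).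
  by exists k; split => //; apply: ltn_trans (ltnSn m).
have Hm1 : m1 = m.+1 by apply/eqP; rewrite eqn_leq H1 Hm.
by subst m1; rewrite H2 in H3.
Qed.

Lemma dense_lemma (b : nat -> R) (lo hi : R) :
  (forall n, (0 < n)%N -> b n - 2 * harmonic n <= b n.+1) ->
  (forall N, exists2 m, (N <= m)%N & hi <= b m) ->
  (forall N, exists2 m, (N <= m)%N & b m <= lo + 2 * harmonic m) ->
  forall x, lo <= x <= hi -> forall e : R, 0 < e ->
  exists2 n, (0 < n)%N & `|x - b n| < e.
Proof.
move=> Hstep Hhi Hlo x /andP [Hx1 Hx2] e He.
have He2 : 0 < e / 2 by rewrite divr_gt0.
have [N _ HN] := near_infty_natSinv_lt (PosNum He2).
have HN' : forall k, (N <= k)%N -> 2 * harmonic k < e.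
  move=> k Hk; have H : k.+1%:R^-1 < e / 2 := HN k Hk.
  have Hk0 : (0:R) < k.+1%:R by rewrite ltr0n.
  rewrite /= (_ : e = 2 * (e / 2)); last by rewrite mulrC divfK ?pnatr_eq0.
  by rewrite ltr_pM2l.
have [m1 Hm1 Hb1] := Hhi N.+1.
have [m2 Hm2 Hb2] := Hlo m1.
have Hm1pos : (0 < m1)%N by apply: leq_trans Hm1.
case: (leP x (b m2)) => Hxm2.
  exists m2; first exact: leq_trans Hm1pos Hm2.
  rewrite distrC ger0_norm ?subr_ge0 //.
  have := HN' m2 (leq_trans (ltnW Hm1) Hm2); lra.
have [k [Hk1 Hk2 Hk3 Hk4]] := @nat_ivt (fun k => x <= b k) m1 m2 Hm2 (le_trans Hx2 Hb1) (negbT (lt_geF Hxm2)).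
rewrite -ltNge in Hk4.
exists k.+1 => //.
have Hs := Hstep k (leq_trans Hm1pos Hk1).
have Hh := HN' k (leq_trans (ltnW Hm1) Hk1).
rewrite ger0_norm ?subr_ge0 ?ltW //; lra.
Qed.

Lemma dense_closure (b : nat -> R) (lo hi : R) :
  (forall x, lo <= x <= hi -> forall e : R, 0 < e -> exists2 n, (0 < n)%N & `|x - b n| < e) ->
  [set x : R | lo <= x <= hi] `<=` closure (b @` [set n : nat | (0 < n)%N]).
Proof.
move=> H x Hx B /nbhs_ballP [e He HB].
have [n Hn Hxn] := H x Hx e He.
exists (b n); split; first by exists n.
by apply: HB; rewrite -ball_normE /ball_ /=.
Qed.
Lemma harm_cvg2 (l : R) : (fun n => (l + 2 * harmonic n)%:E) @ \oo --> l%:E.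
Proof.
apply: cvg_EFin; first exact: nearW.
rewrite -[X in _ --> X]addr0.
apply: cvgD; first exact: cvg_cst.
rewrite -(mulr0 2).
apply: cvgMl_tmp.
exact: cvg_harmonic.
Qed.

Lemma esup_lim (u : nat -> R) (l : R) :
  (forall m, (0 < m)%N -> u m <= l + 2 * harmonic m) ->
  (forall N, exists2 m, (N <= m)%N & l <= u m) ->
  limn_esup (fun n => (u n)%:E) = l%:E.
Proof.
move=> Hub Hinf; rewrite limn_esup_lim; apply: cvg_lim => //.
apply: (@squeeze_cvge _ _ _ _ (cst l%:E) _ (fun n => (l + 2 * harmonic n)%:E)).
- exists 1%N => // n /= Hn; apply/andP; split.
    have [m Hm Hlm] := Hinf n.
    by apply: le_ereal_sup_tmp; exists (u m)%:E => //; exists m.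
  apply: ge_ereal_sup => _ [m /= Hm <-]; rewrite lee_fin.
  apply: (le_trans (Hub m _)); first by apply: leq_trans Hm.
  by rewrite lerD2l ler_pM2l // harm_le.
- exact: cvg_cst.
- exact: harm_cvg2.
Qed.

Lemma einf_lim (u : nat -> R) (l : R) :
  (forall m, (0 < m)%N -> l <= u m) ->
  (forall N, exists2 m, (N <= m)%N & u m <= l + 2 * harmonic m) ->
  limn_einf (fun n => (u n)%:E) = l%:E.
Proof.
move=> Hlb Hsup; rewrite limn_einf_lim; apply: cvg_lim => //.
apply: (@squeeze_cvge _ _ _ _ (cst l%:E) _ (fun n => (l + 2 * harmonic n)%:E)).
- exists 1%N => // n /= Hn; apply/andP; split.
    apply: le_ereal_inf_tmp => _ [m /= Hm <-]; rewrite lee_fin.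
    by apply: Hlb; apply: leq_trans Hm.
  have [m Hm Hlm] := Hsup n.
  apply: ge_ereal_inf; exists (u m)%:E; first by exists m.
  rewrite lee_fin; apply: (le_trans Hlm).
  by rewrite lerD2l ler_pM2l // harm_le.
- exact: cvg_cst.
- exact: harm_cvg2.
Qed.
End An.

Section Analysis.
Variable R : realType.

Lemma pos_neq0 (y : R) : 0 < y -> y != 0.
Proof. by move=> H; rewrite gt_eqF. Qed.

Lemma div_le_div (a b c d : nat) : (0 < b)%N -> (0 < d)%N -> (a * d <= c * b)%N ->
  (a%:R / b%:R : R) <= c%:R / d%:R.
Proof.
move=> Hb Hd H.
rewrite ler_pdivrMr ?ltr0n // mulrAC ler_pdivlMr ?ltr0n //.
by rewrite -!natrM ler_nat.
Qed.

Lemma aratio (n : nat) : a_ratio R aE n = (aE n)%:R / (n * n)%:R.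
Proof. by rewrite /a_ratio expnS expn1. Qed.

Lemma B1 m : (0 < m)%N -> 6^-1 <= a_ratio R aE m.
Proof.
move=> Hm; rewrite aratio (_ : (6^-1 : R) = 1%:R / 6%:R); last by rewrite mulr1n div1r.
apply: div_le_div => //; first by rewrite muln_gt0 Hm.
have := aE_lb Hm; lia.
Qed.

Lemma B2 m : (0 < m)%N -> a_ratio R aE m <= 2^-1 + 2 * harmonic m.
Proof.
move=> Hm.
have -> : 2^-1 + 2 * harmonic m = (m + 5)%N%:R / (2 * m + 2)%N%:R :> R.
  rewrite (_ : harmonic m = (m.+1%:R)^-1 :> R) // -[m.+1%:R]natr1 !natrD ?natrM.
  have Hx : (0:R) <= m%:R by [].
  have H2 : (2:R) != 0 by [].
  by field; apply/andP; split; apply: pos_neq0; lra.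
rewrite aratio; apply: div_le_div; [by rewrite muln_gt0 Hm | lia |].
have := aE_ub m; nia.
Qed.

Lemma B3 N : exists2 m, (N <= m)%N & 2^-1 <= a_ratio R aE m.
Proof.
have HN := ltn_expl N (isT : (1 < 2)%N).
exists (4 * 2 ^ N - 1)%N; first by lia.
have Hp : (0 < 4 * 2 ^ N - 1)%N by lia.
rewrite aratio (_ : (2^-1 : R) = 1%:R / 2%:R); last by rewrite mulr1n div1r.
apply: div_le_div => //; first by rewrite muln_gt0 Hp.
have := aE_hi N; lia.
Qed.

Lemma B4 N : exists2 m, (N <= m)%N & a_ratio R aE m <= 6^-1 + 2 * harmonic m.
Proof.
have HN := ltn_expl N.+2 (isT : (1 < 2)%N).
have Hp : (4 <= 2 ^ N.+2)%N by rewrite (_ : 4 = 2 ^ 2)%N // leq_exp2l.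
set m := (4 * 2 ^ N.+2 - 5)%N.
have Hm : (11 <= m)%N by rewrite /m; lia.
exists m; first by rewrite /m; lia.
have -> : 6^-1 + 2 * harmonic m = (m + 13)%N%:R / (6 * m + 6)%N%:R :> R.
  rewrite (_ : harmonic m = (m.+1%:R)^-1 :> R) // -[m.+1%:R]natr1 !natrD ?natrM.
  have Hx : (0:R) <= m%:R by [].
  have H2 : (2:R) != 0 by [].
  by field; apply/andP; split; apply: pos_neq0; lra.
rewrite aratio; apply: div_le_div; [rewrite muln_gt0; lia | lia |].
have := aE_lo (isT : (2 <= N.+2)%N); rewrite -/m => H; nia.
Qed.

Lemma B5 n : (0 < n)%N -> a_ratio R aE n - 2 * harmonic n <= a_ratio R aE n.+1.
Proof.
move=> Hn; rewrite lerBlDr.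
have -> : a_ratio R aE n.+1 + 2 * harmonic n =
          (aE n.+1 + 2 * n.+1)%N%:R / (n.+1 * n.+1)%N%:R :> R.
  rewrite aratio (_ : harmonic n = (n.+1%:R)^-1 :> R) // -[n.+1%:R]natr1 !natrD ?natrM.
  have Hx : (0:R) <= n%:R by [].
  by field; apply: pos_neq0; lra.
rewrite aratio; apply: div_le_div; [by rewrite muln_gt0 Hn | by [] |].
have := aE_le Hn; have := aE_mono n; nia.
Qed.

End Analysis.

Unset Implicit Arguments.

Theorem mainTheorem10 (R : realType) :
  (exists c, is_comp_inverse c) /\
  forall c : nat -> 'F_2, is_comp_inverse c ->
    (exists a, is_enum c a) /\
    forall a : nat -> nat, is_enum c a ->
      limn_einf (fun n => (a_ratio R a n)%:E) = (6^-1 : R)%:E /\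
      limn_esup (fun n => (a_ratio R a n)%:E) = (2^-1 : R)%:E /\
      [set x : R | 6^-1 <= x <= 2^-1] `<=`
        closure (a_ratio R a @` [set n : nat | (0 < n)%N]).
Proof.
split; first by exists cstar; exact: cstar_inv.
move=> c Hc; have Hcs := comp_inv_unique Hc.
have HE : is_enum c aE.
  split; first by [].
  split; first exact: aE_mono.
  by move=> m Hm; rewrite Hcs; exact: aE_range.
split; first by exists aE.
move=> a [a0 [amono arange]].
have Ha : a = aE.
  apply: funext; apply: enum_unique => //; first exact: aE_mono.
  - by move=> m Hm /(arange m Hm); rewrite Hcs => /(aE_range Hm).
  - by move=> m Hm /(aE_range Hm); rewrite -Hcs => /(arange m Hm).
subst a.
split; first exact: einf_lim (@B1 R) (@B4 R).
split; first exact: esup_lim (@B2 R) (@B3 R).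
apply: dense_closure; apply: dense_lemma; [exact: B5 | exact: B3 | exact: B4].
Qed.
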